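(* Drag sum is associative (whenever the sums involved are defined, i.e. the drags are pairwise compatible), commutative ($D\oplus D'=D'\oplus D$ for compatible $D,D'$), idempotent ($D\oplus D=D$), and has the empty drag as identity element ($D\oplus\varnothing=D$).
   Context: Fix a set $\mathcal{F}$ of function symbols, each with a fixed arity, and a set $\mathcal{X}$ of variables disjoint from $\mathcal{F}$. A drag is a tuple $D=\langle V,R,L,X,S\rangle$ where: $V$ is a finite set of vertices; $R:V\to\mathbb{N}$ is a finite multiset of vertices, the roots ($v$ is rooted if $R(v)>0$); $S\subseteq V$ is the set of sprouts and $I=V\setminus S$ the set of internal vertices; $L:V\to\mathcal{F}\cup\mathcal{X}$ labels internal vertices by function symbols and sprouts by variables; $X:V\to V^*$ assigns to each vertex a list of successors whose length is the arity of its label (sprouts have no successors). If $b$ is the $k$-th element of $X(a)$, then $(a,k,b)$ is an edge with tail $a$ and head $b$. $\mathrm{pred}(v,D)$ is the number of edges with head $v$, and the indegree of $v$ is $\mathrm{In}(v,D)=\mathrm{pred}(v,D)+R(v)$. The empty drag $\varnothing$ has no vertices. Drags $D=\langle V,R,L,X,S\rangle$ and $D'=\langle V',R',L',X',S'\rangle$ are compatible if $V\cap V'$ is closed under the successor functions of both drags, $L$ and $L'$ coincide on $V\cap V'$, and every shared vertex $v$ has the same indegree in $D$ and in $D'$, this indegree being at least the total number of distinct edges of $D$ and of $D'$ with head $v$. Their sum is $D\oplus D'=\langle V\cup V',R'',L\cup L',X\cup X',S\cup S'\rangle$, where $R''(v)=R(v)-|\{\text{edges of }D'\text{ not in }D\text{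 with head }v\}|$ for $v\in V$ (for $v\in V\cap V'$ this equals $R'(v)-|\{\text{edges of }D\text{ not in }D'\text{ with head }v\}|$) and $R''(v)=R'(v)$ for $v\in V'\setminus V$. *)

(* Defs.v *)
From HB Require Import structures.
From mathcomp Require Import all_boot.
From mathcomp Require Import finmap.

Set Implicit Arguments.
Unset Strict Implicit.
Unset Printing Implicit Defensive.

Local Open Scope fset_scope.

Section Drags.

(* T   : the universe of vertex names (drags share vertices through it)
   sym : the function symbols F, with arity ar
   var : the variables X (disjoint from F: labels live in the sum sym + var) *)
Variables (T : choiceType) (sym var : Type) (ar : sym -> nat).

(* A drag <V, R, L, X, S>.  The functions R, L, X are total on T but only
   their values on V are meaningful (see drag_eq). *)
Record drag := Drag {
  dV : {fset T};
  dR : T -> nat;            (* roots, a multiset of vertices *)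
  dS : {fset T};
  dL : T -> sym + var;
  dX : T -> seq T
}.

Definition wf_drag (D : drag) : Prop :=
  dS D `<=` dV D /\
  forall v, v \in dV D ->
    (v \in dS D -> (exists x, dL D v = inr x) /\ dX D v = [::]) /\
    (v \notin dS D -> exists f, dL D v = inl f /\ size (dX D v) = ar f) /\
    all (fun w => w \in dV D) (dX D v).

(* The edges (a, k, b) of D: b is the k-th element of X(a) (0-based). *)
Definition edges (D : drag) : seq (T * nat * T) :=
  flatten [seq [seq (a, k, nth a (dX D a) k) | k <- iota 0 (size (dX D a))]
          | a <- dV D].

Definition is_edge (D : drag) (e : T * nat * T) : bool := e \in edges D.

Definition npred (v : T) (D : drag) : nat := count (fun e => e.2 == v) (edges D).
Definition indeg (v : T) (D : drag) : nat := npred v D + dR D v.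

Definition new_edges_to (v : T) (D D' : drag) : nat :=
  count (fun e => (e.2 == v) && ~~ is_edge D e) (edges D').

Definition distinct_edges_to (v : T) (D D' : drag) : nat :=
  size (undup [seq e <- edges D ++ edges D' | e.2 == v]).

(* Compatibility.  Besides the conditions of the paper we require that the
   successor functions agree on shared vertices, which is exactly what is
   needed for X u X' to be a function. *)
Definition compatible (D D' : drag) : Prop :=
  (forall v, v \in dV D `&` dV D' ->
     all (fun w => w \in dV D `&` dV D') (dX D v) /\
     all (fun w => w \in dV D `&` dV D') (dX D' v)) /\
  (forall v, v \in dV D `&` dV D' -> dL D v = dL D' v) /\
  (forall v, v \in dV D `&` dV D' -> dX D v = dX D' v) /\
  (forall v, v \in dV D `&` dV D' ->
     indeg v D = indeg v D' /\ distinct_edges_to v D D' <= indeg v D).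

Definition dsum (D D' : drag) : drag :=
  Drag (dV D `|` dV D')
       (fun v => if v \in dV D then dR D v - new_edges_to v D D' else dR D' v)
       (dS D `|` dS D')
       (fun v => if v \in dV D then dL D v else dL D' v)
       (fun v => if v \in dV D then dX D v else dX D' v).

Definition drag_eq (D D' : drag) : Prop :=
  dV D = dV D' /\ dS D = dS D' /\
  (forall v, v \in dV D ->
     dR D v = dR D' v /\ dL D v = dL D' v /\ dX D v = dX D' v).

(* The empty drag: no vertices (hence, no sprouts). All such drags are
   equal for drag_eq. *)
Definition is_empty_drag (D : drag) : Prop := dV D = fset0 /\ dS D = fset0.

End Drags.

(* Main.v *)
Require Import Defs.
From HB Require Import structures.
From mathcomp Require Import all_boot.
From mathcomp Require Import finmap.
From mathcomp Require Import zify.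

Set Implicit Arguments.
Unset Strict Implicit.
Unset Printing Implicit Defensive.
Local Open Scope fset_scope.

Definition fe (T : choiceType) (sym var : Type) (D : drag T sym var) (a : T) :=
  [seq (a, k, nth a (dX D a) k) | k <- iota 0 (size (dX D a))].

Lemma edgesE (T : choiceType) (sym var : Type) (D : drag T sym var) :
  edges D = flatten [seq fe D a | a <- dV D].
Proof. by []. Qed.

Lemma mem_fe (T : choiceType) (sym var : Type) (D : drag T sym var) a e :
  (e \in fe D a) = [&& e.1.1 == a, e.1.2 < size (dX D a) & e.2 == nth a (dX D a) e.1.2].
Proof.
apply/mapP/idP.
  by case=> k; rewrite mem_iota add0n => /andP[_ hk] ->; rewrite /= eqxx hk eqxx.
case: e => [[a' k] b] /= /and3P[/eqP-> hk /eqP->]; exists k => //.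
by rewrite mem_iota add0n hk.
Qed.

Lemma mem_edges (T : choiceType) (sym var : Type) (D : drag T sym var) e :
  (e \in edges D) = (e.1.1 \in dV D) && (e \in fe D e.1.1).
Proof.
rewrite edgesE; apply/flattenP/andP.
  case=> s /mapP[a ha ->] he; have := he; rewrite mem_fe => /and3P[/eqP ea _ _].
  by rewrite ea.
by case=> h1 h2; exists (fe D e.1.1) => //; apply/map_f.
Qed.

Lemma head_in (T : choiceType) (sym var : Type) (ar : sym -> nat) (D : drag T sym var) e :
  wf_drag ar D -> e \in edges D -> e.2 \in dV D.
Proof.
case=> _ H; rewrite mem_edges mem_fe => /andP[hv /and3P[_ hk /eqP ->]].
have [_ [_ hall]] := H _ hv; move/allP: hall; apply; exact: mem_nth.
Qed.

Lemma fe_sum (T : choiceType) (sym var : Type) (D D' : drag T sym var) a :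
  fe (dsum D D') a = if a \in dV D then fe D a else fe D' a.
Proof. by rewrite /fe /=; case: ifP. Qed.

Lemma is_edge_sum (T : choiceType) (sym var : Type) (D D' : drag T sym var) e :
  (forall v, v \in dV D `&` dV D' -> dX D v = dX D' v) ->
  is_edge (dsum D D') e = is_edge D e || is_edge D' e.
Proof.
move=> hX; rewrite /is_edge !mem_edges fe_sum /= in_fsetU.
case ha: (e.1.1 \in dV D) => /=; last by [].
case ha': (e.1.1 \in dV D') => /=; last by rewrite orbF.
have -> : fe D' e.1.1 = fe D e.1.1 by rewrite /fe hX // in_fsetI ha ha'.
by rewrite orbb.
Qed.

Lemma count_flat (A B : Type) (p : pred B) (f : A -> seq B) s :
  count p (flatten (map f s)) = \sum_(a <- s) count p (f a).
Proof. by elim: s => [|x s IH]; rewrite ?big_nil ?big_cons //= count_cat IH. Qed.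

Lemma count_sum (T : choiceType) (sym var : Type) (D D' : drag T sym var) p :
  (forall v, v \in dV D `&` dV D' -> dX D v = dX D' v) ->
  count p (edges (dsum D D')) =
  (count p (edges D) + count (fun e => p e && ~~ is_edge D e) (edges D'))%N.
Proof.
move=> hX; rewrite !edgesE !count_flat.
have hp : perm_eq (dV (dsum D D')) (dV D ++ [seq a <- dV D' | a \notin dV D]).
  apply: uniq_perm.
  - exact: fset_uniq.
  - rewrite cat_uniq fset_uniq filter_uniq ?fset_uniq // andbT.
    by apply/hasPn => x; rewrite mem_filter => /andP[].
  - by move=> x; rewrite mem_cat mem_filter /= in_fsetU; case: (x \in dV D).
rewrite (perm_big _ hp) big_cat /=; congr (_ + _)%N.
  by apply: eq_big_seq => a ha; rewrite fe_sum ha.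
rewrite big_filter [RHS](bigID (fun a => a \in dV D)) /= [X in _ = (X + _)%N]big1_seq ?add0n; last first.
  move=> a /andP[haV haV'].
  have hfe : fe D' a = fe D a by rewrite /fe hX // in_fsetI haV haV'.
  apply/eqP; rewrite -leqn0 leqNgt -has_count; apply/hasPn => e he.
  move: he; rewrite hfe => he; have := he; rewrite mem_fe => /and3P[/eqP ea _ _].
  by rewrite /is_edge mem_edges ea haV he andbF.
rewrite big_seq_cond [RHS]big_seq_cond; apply: eq_bigr => a /andP[haV' haV].
rewrite fe_sum (negbTE haV); apply: eq_in_count => e he.
have := he; rewrite mem_fe => /and3P[/eqP ea _ _].
by rewrite /is_edge mem_edges ea (negbTE haV) /= andbT.
Qed.

Lemma uniq_edges (T : choiceType) (sym var : Type) (D : drag T sym var) :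
  uniq (edges D).
Proof.
rewrite edgesE; have : uniq (dV D : seq T) by exact: fset_uniq.
elim: (dV D : seq T) => //= a s IH /andP[ha hs]; rewrite cat_uniq IH // andbT.
apply/andP; split.
  by rewrite map_inj_uniq ?iota_uniq // => k1 k2 [->].
apply/hasPn => e he; apply/negP => he'; case/flattenP: he => t /mapP[b hb ->] hb'.
move: he' hb'; rewrite !mem_fe => /and3P[/eqP ea _ _] /and3P[/eqP eb _ _].
by move: ha; rewrite -ea eb hb.
Qed.

Lemma count_head0 (T : choiceType) (sym var : Type) (ar : sym -> nat) (D : drag T sym var) v (q : pred (T * nat * T)) :
  wf_drag ar D -> v \notin dV D -> count (fun e => (e.2 == v) && q e) (edges D) = 0.
Proof.
move=> w hv; apply/eqP; rewrite -leqn0 leqNgt -has_count; apply/hasPn => e he /=.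
apply/negP => /andP[/eqP he2 _]; move: hv; rewrite -he2 (head_in w he) //.
Qed.

Lemma size_undup_cat2 (A : eqType) (s t : seq A) :
  uniq s -> uniq t -> size (undup (s ++ t)) = (count (fun x => x \notin t) s + size t)%N.
Proof. by move=> us ut; rewrite undup_cat size_cat size_filter !undup_id. Qed.

Lemma comm_R (T : choiceType) (sym var : Type) (D D' : drag T sym var) v :
  indeg v D = indeg v D' -> distinct_edges_to v D D' <= indeg v D ->
  dR D v - new_edges_to v D D' = dR D' v - new_edges_to v D' D.
Proof.
rewrite /indeg /distinct_edges_to /new_edges_to /npred => hi hd.
set h := fun e : T * nat * T => e.2 == v.
have eqc : forall (X Y : drag T sym var),
   count (fun x => x \notin [seq e <- edges Y | h e]) [seq e <- edges X | h e]
   = count (fun e => (e.2 == v) && ~~ is_edge Y e) (edges X).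
  move=> X Y; rewrite count_filter; apply: eq_count => e /=.
  rewrite mem_filter /is_edge /h; case: (e.2 == v); rewrite /= ?andbT ?andbF //.
have d1 := size_undup_cat2 (filter_uniq h (uniq_edges D)) (filter_uniq h (uniq_edges D')).
have d2 := size_undup_cat2 (filter_uniq h (uniq_edges D')) (filter_uniq h (uniq_edges D)).
have hperm : size (undup ([seq e <- edges D | h e] ++ [seq e <- edges D' | h e])) =
             size (undup ([seq e <- edges D' | h e] ++ [seq e <- edges D | h e])).
  apply: perm_size; apply: uniq_perm; try exact: undup_uniq; move=> x.
  by rewrite !mem_undup !mem_cat orbC.
move: hd; rewrite filter_cat d1. rewrite eqc.  rewrite !size_filter => hd.
move: hperm; rewrite d1 d2 !eqc !size_filter => hp.
rewrite /h in hd hp.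
set c := count (fun e : T*nat*T => e.2 == v) (edges D) in hi hd hp *.
set c' := count (fun e : T*nat*T => e.2 == v) (edges D') in hi hd hp *.
set u := count (fun e : T*nat*T => (e.2 == v) && ~~ is_edge D e) (edges D') in hi hd hp *.
set u' := count (fun e : T*nat*T => (e.2 == v) && ~~ is_edge D' e) (edges D) in hi hd hp *.
lia.
Qed.

Theorem mainTheorem11 (T : choiceType) (sym var : Type) (ar : sym -> nat) :
  (* associativity, for pairwise compatible drags *)
  (forall D1 D2 D3 : drag T sym var,
     wf_drag ar D1 -> wf_drag ar D2 -> wf_drag ar D3 ->
     compatible D1 D2 -> compatible D2 D3 -> compatible D1 D3 ->
     drag_eq (dsum (dsum D1 D2) D3) (dsum D1 (dsum D2 D3))) /\
  (* commutativity *)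
  (forall D D' : drag T sym var,
     wf_drag ar D -> wf_drag ar D' -> compatible D D' ->
     drag_eq (dsum D D') (dsum D' D)) /\
  (* idempotence *)
  (forall D : drag T sym var, wf_drag ar D -> drag_eq (dsum D D) D) /\
  (* the empty drag is an identity *)
  (forall D E : drag T sym var,
     wf_drag ar D -> wf_drag ar E -> is_empty_drag E -> drag_eq (dsum D E) D).
Proof.
split; [|split; [|split]].
- move=> D1 D2 D3 w1 w2 w3 [_ [_ [hX12 _]]] [_ [_ [hX23 _]]] _.
  split; first by rewrite /= fsetUA.
  split; first by rewrite /= fsetUA.
  move=> v _ /=; rewrite !in_fsetU /new_edges_to (count_sum _ hX23).
  have E12 : (fun e => (e.2 == v) && ~~ is_edge (dsum D1 D2) e) =1
             (fun e => (e.2 == v) && ~~ (is_edge D1 e || is_edge D2 e)).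
    by move=> e /=; rewrite (is_edge_sum _ hX12).
  rewrite (eq_count E12).
  case h1: (v \in dV D1) => /=.
    split => //; rewrite -subnDA; congr (_ - _); congr (_ + _)%N.
    by apply: eq_count => e; rewrite negb_or andbA.
  case h2: (v \in dV D2) => /=; last by [].
  split => //; congr (_ - _); apply: eq_count => e /=.
  case he: (e.2 == v) => //=.
  have -> : is_edge D1 e = false.
    by apply/negP => /(head_in w1); rewrite (eqP he) h1.
  by [].
- move=> D D' w w' [_ [hL [hX hI]]].
  split; first by rewrite /= fsetUC.
  split; first by rewrite /= fsetUC.
  move=> v; rewrite /= in_fsetU.
  case h: (v \in dV D); case h': (v \in dV D') => //= _.
  + have hv : v \in dV D `&` dV D' by rewrite in_fsetI h h'.
    have [i d] := hI v hv.
    split; first exact: comm_R.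
    by split; [exact: hL | exact: hX].
  + split => //.
    have := count_head0 (fun e => ~~ is_edge D e) w' (negbT h').
    by rewrite /new_edges_to => ->; rewrite subn0.
  + split => //.
    have := count_head0 (fun e => ~~ is_edge D' e) w (negbT h).
    by rewrite /new_edges_to => ->; rewrite subn0.
- move=> D w.
  split; first by rewrite /= fsetUid.
  split; first by rewrite /= fsetUid.
  move=> v; rewrite /= in_fsetU orbb => ->; split => //.
  have -> : new_edges_to v D D = 0; last by rewrite subn0.
  apply/eqP; rewrite -leqn0 leqNgt -has_count; apply/hasPn => e he /=.
  by rewrite /is_edge he andbF.
- move=> D E w wE [hV hS].
  split; first by rewrite /= hV fsetU0.
  split; first by rewrite /= hS fsetU0.
  move=> v; rewrite /= in_fsetU hV in_fset0 orbF => ->; split => //.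
  have -> : new_edges_to v D E = 0; last by rewrite subn0.
  apply/eqP; rewrite -leqn0 leqNgt -has_count; apply/hasPn => e he /=.
  by move: he; rewrite mem_edges hV in_fset0.
Qed.
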